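(* For every integer $n\ge 1$ and every vertex $v$ of \[\mathrm{Newt}(U_n)=\sum_{1\le i<j\le n}\mathrm{conv}\{e_i+e_{n+j},\,e_j+e_{n+i}\}\subseteq\mathbb{R}^{2n},\] we have $v\in N_{\mathrm{Newt}(U_n)}(\{v\})$.
   Context: $e_1,\dots,e_{2n}$ are the standard basis vectors of $\mathbb{R}^{2n}$ and the sum is a Minkowski sum. For a polytope $P\subseteq\mathbb{R}^m$ and $a\in\mathbb{R}^m$, $\mathrm{face}_a(P)=\{x\in P: a\cdot y\le a\cdot x \text{ for all } y\in P\}$, and for a face $F$ of $P$ the normal cone is $N_P(F)=\{a\in\mathbb{R}^m:\mathrm{face}_a(P)=F\}$. *)

(* Defs.v *)
From HB Require Import structures.
From mathcomp Require Import all_boot all_order all_algebra.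
From mathcomp Require Import reals.
Set Implicit Arguments. Unset Strict Implicit. Unset Printing Implicit Defensive.
Import Order.TTheory GRing.Theory Num.Theory.
Local Open Scope ring_scope.

Section Polytopes.
Variable R : realType.

Definition dotv (m : nat) (a x : 'rV[R]_m) : R := \sum_(k < m) a 0 k * x 0 k.

Definition ebasis (m : nat) (k : 'I_m) : 'rV[R]_m := delta_mx 0 k.

Definition face (m : nat) (P : 'rV[R]_m -> Prop) (a : 'rV[R]_m) : 'rV[R]_m -> Prop :=
  fun x => P x /\ forall y, P y -> dotv a y <= dotv a x.

Definition normal_cone (m : nat) (P F : 'rV[R]_m -> Prop) : 'rV[R]_m -> Prop :=
  fun a => forall x, face P a x <-> F x.

Definition is_vertex (m : nat) (P : 'rV[R]_m -> Prop) (v : 'rV[R]_m) : Prop :=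
  exists a, forall x, face P a x <-> x = v.

Definition conv2 (m : nat) (a b : 'rV[R]_m) : 'rV[R]_m -> Prop :=
  fun x => exists t : R, 0 <= t <= 1 /\ x = t *: a + (1 - t) *: b.

Definition minkowski_sum (m : nat) (I : finType) (Q : pred I)
    (S : I -> 'rV[R]_m -> Prop) : 'rV[R]_m -> Prop :=
  fun x => exists f : I -> 'rV[R]_m,
    (forall p, Q p -> S p (f p)) /\ x = \sum_(p | Q p) f p.

(* Newt(U_n) in R^(2n), coordinates indexed by 'I_(n+n):
   e_i = ebasis (lshift n i), e_{n+j} = ebasis (rshift n j)  (0-based i, j) *)
Definition NewtU (n : nat) : 'rV[R]_(n + n) -> Prop :=
  minkowski_sum (fun p : 'I_n * 'I_n => (p.1 < p.2)%N)
    (fun p => conv2 (ebasis (lshift n p.1) + ebasis (rshift n p.2))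
                    (ebasis (lshift n p.2) + ebasis (rshift n p.1))).

End Polytopes.

(* Main.v *)
Require Import Defs.
From HB Require Import structures.
From mathcomp Require Import all_boot all_order all_algebra.
From mathcomp Require Import reals.
From mathcomp Require Import ring lra.
Set Implicit Arguments. Unset Strict Implicit. Unset Printing Implicit Defensive.
Import Order.TTheory GRing.Theory Num.Theory.
Local Open Scope ring_scope.

Section Aux.
Variable R : realType.
Variable m : nat.
Implicit Types a b x y : 'rV[R]_m.

Lemma dotvC a b : dotv a b = dotv b a.
Proof. by rewrite /dotv; apply: eq_bigr => k _; rewrite mulrC. Qed.

Lemma dotvD a x y : dotv a (x + y) = dotv a x + dotv a y.
Proof. by rewrite /dotv -big_split; apply: eq_bigr => k _; rewrite mxE mulrDr. Qed.

Lemma dotvZ a t x : dotv a (t *: x) = t * dotv a x.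
Proof. by rewrite /dotv mulr_sumr; apply: eq_bigr => k _; rewrite mxE mulrCA. Qed.

Lemma dotv_sum a (I : finType) (Q : pred I) (F : I -> 'rV[R]_m) :
  dotv a (\sum_(p | Q p) F p) = \sum_(p | Q p) dotv a (F p).
Proof.
rewrite /dotv (eq_bigr (fun k => \sum_(p | Q p) a 0 k * F p 0 k)).
  by rewrite exchange_big.
by move=> k _; rewrite summxE mulr_sumr.
Qed.

Lemma ebasisE (k j : 'I_m) : ebasis R k 0 j = (j == k)%:R.
Proof. by rewrite /ebasis mxE eqxx. Qed.

Variables (I : finType) (Q : pred I) (A B : I -> 'rV[R]_m).
Definition PS := minkowski_sum Q (fun p => conv2 (A p) (B p)).
Definition best c p := if dotv c (B p) < dotv c (A p) then A p else B p.
Definition gpt c := \sum_(p | Q p) best c p.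

Lemma seg_le c t : 0 <= t <= 1 ->
  forall p, dotv c (t *: A p + (1 - t) *: B p) <= dotv c (best c p).
Proof.
move=> /andP [t0 t1] p; rewrite dotvD !dotvZ /best.
case: ltrP => h; nra.
Qed.

Lemma gpt_in c : PS (gpt c).
Proof.
exists (best c); split => // p _; rewrite /best.
case: ltrP => _.
  by exists 1; rewrite ler01 lexx subrr scale0r addr0 scale1r.
by exists 0; rewrite ler01 lexx subr0 scale0r add0r scale1r.
Qed.

Lemma gpt_max c x : PS x -> dotv c x <= dotv c (gpt c).
Proof.
move=> [f [hf ->]]; rewrite !dotv_sum; apply: ler_sum => p Qp.
have [t [ht ->]] := hf p Qp; exact: seg_le.
Qed.

Lemma gpt_uniq c : (forall p, Q p -> dotv c (A p) != dotv c (B p)) ->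
  forall x, PS x -> dotv c (gpt c) <= dotv c x -> x = gpt c.
Proof.
move=> hne x [f [hf ->]]; rewrite !dotv_sum => hle.
have le p : Q p -> dotv c (f p) <= dotv c (best c p).
  by move=> Qp; have [t [ht ->]] := hf p Qp; exact: seg_le.
have eq0 : \sum_(p | Q p) (dotv c (best c p) - dotv c (f p)) = 0.
  rewrite sumrB; apply/eqP; rewrite subr_eq0 eq_le hle andbC /=.
  rewrite andbT; exact: ler_sum.
have := (@psumr_eq0P _ _ Q _ (fun p Qp => etrans (subr_ge0 _ _) (le p Qp)) eq0).
move=> h; apply: eq_bigr => p Qp; have := h p Qp.
have [t [/andP[t0 t1] ft]] := hf p Qp.
have := hne p Qp; rewrite ft dotvD !dotvZ /best.
case: ltrP => hc hne' e.
- have -> : t = 1.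
    have : (1 - t) * (dotv c (A p) - dotv c (B p)) = 0 by lra.
    move/eqP; rewrite mulf_eq0 !subr_eq0 => /orP [/eqP -> //|].
    by move=> /eqP hh; rewrite hh ltxx in hc.
  by rewrite subrr scale0r addr0 scale1r.
- have -> : t = 0.
    have : t * (dotv c (A p) - dotv c (B p)) = 0 by lra.
    move/eqP; rewrite mulf_eq0 subr_eq0 => /orP [/eqP //|].
    by move=> hh; rewrite hh in hne'.
  by rewrite subr0 scale0r add0r scale1r.
Qed.

End Aux.

Section Spec.
Variable R : realType.
Variable n : nat.
Local Notation V := 'rV[R]_(n + n).
Definition Qn := fun p : 'I_n * 'I_n => (p.1 < p.2)%N.
Definition Aq (p : 'I_n * 'I_n) : V :=
  ebasis R (lshift n p.1) + ebasis R (rshift n p.2).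
Definition Bq (p : 'I_n * 'I_n) : V :=
  ebasis R (lshift n p.2) + ebasis R (rshift n p.1).

Lemma NewtU_PS : @NewtU R n = PS Qn Aq Bq.
Proof. by []. Qed.

Definition w (c : V) (k : 'I_n) := c 0 (lshift n k) - c 0 (rshift n k).

Lemma dotv_e (c : V) k : dotv c (ebasis R k) = c 0 k.
Proof.
rewrite /dotv (bigD1 k) //= ebasisE eqxx mulr1 big1 ?addr0 //.
by move=> j /negbTE hj; rewrite ebasisE hj mulr0.
Qed.

Lemma wAB c q : dotv c (Aq q) - dotv c (Bq q) = w c q.1 - w c q.2.
Proof. rewrite /Aq /Bq /w !dotvD !dotv_e; ring. Qed.

Lemma w_sum (I : finType) (P : pred I) (F : I -> V) k :
  w (\sum_(p | P p) F p) k = \sum_(p | P p) w (F p) k.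
Proof. by rewrite /w !summxE -sumrB. Qed.

Lemma wA q k : w (Aq q) k = (q.1 == k)%:R - (q.2 == k)%:R.
Proof.
rewrite /w /Aq /ebasis !mxE !eqxx /= !eq_shift !(eq_sym k) addr0 add0r //.
Qed.

Lemma wB q k : w (Bq q) k = (q.2 == k)%:R - (q.1 == k)%:R.
Proof.
rewrite /w /Bq /ebasis !mxE !eqxx /= !eq_shift !(eq_sym k) addr0 add0r //.
Qed.

Lemma w_best c q k : w c q.1 != w c q.2 ->
  w (best Aq Bq c q) k = Num.sg (w c q.1 - w c q.2) * ((q.1 == k)%:R - (q.2 == k)%:R).
Proof.
move=> hne; rewrite /best -subr_gt0 wAB.
case: ltrP => h.
  by rewrite gtr0_sg // mul1r wA.
have h' : w c q.1 - w c q.2 < 0.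
  by rewrite lt_neqAle h andbT subr_eq0.
by rewrite ltr0_sg // wB mulN1r opprB.
Qed.

Lemma w_gpt c : (forall q, Qn q -> w c q.1 != w c q.2) ->
  forall k, w (gpt Qn Aq Bq c) k = \sum_y Num.sg (w c k - w c y).
Proof.
move=> hne k; rewrite /gpt w_sum.
set G := fun q : 'I_n * 'I_n =>
  Num.sg (w c q.1 - w c q.2) * ((q.1 == k)%:R - (q.2 == k)%:R).
rewrite (eq_bigr G); last by move=> q Qq; rewrite w_best // hne.
set D := \sum_(q | Qn q) G q.
set T := \sum_y Num.sg (w c k - w c y).
have h1 : \sum_q G q = D + \sum_(q : 'I_n * 'I_n | (q.2 < q.1)%N) G q.
  rewrite (bigID Qn) /=; congr (_ + _).
  rewrite big_mkcond [RHS]big_mkcond; apply: eq_bigr => q _.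
  rewrite /Qn; case: (ltngtP q.1 q.2) => // heq.
  have e : q.1 = q.2 by apply: val_inj.
  rewrite /G e /=.
  have -> : ((q.2 == k)%:R - (q.2 == k)%:R : R) = 0 by apply/eqP; rewrite subr_eq0.
  by rewrite mulr0.
have h2 : \sum_(q : 'I_n * 'I_n | (q.2 < q.1)%N) G q = D.
  rewrite (reindex_inj (h := fun q : 'I_n * 'I_n => (q.2, q.1))) /=.
    rewrite /D /Qn; apply: eq_big => // q _; rewrite /G /=.
    rewrite -[w c q.2 - w c q.1]opprB sgrN; ring.
  by move=> [x y] [x' y'] /= [-> ->].
have h3 : \sum_q G q = \sum_x \sum_y G (x, y).
  by rewrite pair_big; apply: eq_bigr => [[x y]] _.
have h4 : \sum_x \sum_y G (x, y) = T - \sum_x Num.sg (w c x - w c k).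
  rewrite /G /=.
  under eq_bigr => x _ do (under eq_bigr => y _ do rewrite mulrBr; rewrite sumrB).
  rewrite sumrB; congr (_ - _).
    rewrite (bigD1 k) //= [X in _ + X]big1 ?addr0.
      by rewrite /T; apply: eq_bigr => y _; rewrite eqxx mulr1.
    by move=> x /negbTE hx; apply: big1 => y _; rewrite hx mulr0.
  apply: eq_bigr => x _.
  rewrite (bigD1 k) //= [X in _ + X]big1 ?addr0.
    by rewrite eqxx mulr1.
  by move=> y /negbTE hy; rewrite hy mulr0.
have h5 : \sum_x Num.sg (w c x - w c k) = - T.
  rewrite /T -sumrN; apply: eq_bigr => x _.
  by rewrite -[w c x - w c k]opprB sgrN.
have hDT : D + D = T + T by rewrite -{2}h2 -h1 h3 h4 h5 opprK.
clearbody D T; lra.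
Qed.

Lemma sg_mono (x y : R) : x <= y -> Num.sg x <= Num.sg y.
Proof.
move=> hxy.
case: (ltrgt0P x) => hx; case: (ltrgt0P y) => hy.
all: rewrite ?(gtr0_sg hx) ?(ltr0_sg hx) ?(gtr0_sg hy) ?(ltr0_sg hy) ?hx ?hy ?sgr0 //.
all: lra.
Qed.


Lemma w_mono (a : V) i j :
  (forall k, w (gpt Qn Aq Bq a) k = \sum_y Num.sg (w a k - w a y)) ->
  w a j < w a i -> w (gpt Qn Aq Bq a) j < w (gpt Qn Aq Bq a) i.
Proof.
move=> hw hji; rewrite !hw.
rewrite (bigD1 i) //= [X in _ < X](bigD1 i) //=.
apply: ltr_leD.
  rewrite subrr sgr0 ltr0_sg ?subr_lt0 //; lra.
apply: ler_sum => y _; apply: sg_mono; lra.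
Qed.

Lemma main_aux (a v : V) :
  (forall x, face (PS Qn Aq Bq) a x <-> x = v) ->
  forall x, face (PS Qn Aq Bq) v x <-> x = v.
Proof.
move=> ha.
have hv := (ha v).2 erefl.
have hneA : forall p, Qn p -> dotv a (Aq p) != dotv a (Bq p).
  move=> p0 Qp0; apply/negP => /eqP he.
  have [[f [hf hvf]] hmax] := hv.
  have fp0 : dotv a (f p0) = dotv a (Aq p0).
    have [t [_ ->]] := hf p0 Qp0; rewrite dotvD !dotvZ -he; ring.
  have key : forall g, conv2 (Aq p0) (Bq p0) g ->
      dotv a g = dotv a (Aq p0) ->
      \sum_(p | Qn p) (if p == p0 then g else f p) = v.
    move=> g hg hga; apply: (ha _).1; split.
      exists (fun p => if p == p0 then g else f p); split => //.
      by move=> p Qp; case: eqP => [->|_] //; exact: hf.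
    move=> y Py.
    suff -> : dotv a (\sum_(p | Qn p) (if p == p0 then g else f p)) = dotv a v by exact: hmax.
    rewrite hvf !dotv_sum (bigD1 p0) //= [RHS](bigD1 p0) //= eqxx hga fp0.
    congr (_ + _); apply: eq_bigr => p /andP [_ /negbTE ->] //.
  have hA : conv2 (Aq p0) (Bq p0) (Aq p0).
    by exists 1; rewrite lexx ler01 scale1r subrr scale0r addr0.
  have hB : conv2 (Aq p0) (Bq p0) (Bq p0).
    by exists 0; rewrite lexx ler01 scale0r add0r subr0 scale1r.
  have eAB : Aq p0 = Bq p0.
    have := key _ hA erefl; rewrite -(key _ hB (esym he)).
    rewrite (bigD1 p0 Qp0 (F := fun p => if p == p0 then Aq p0 else f p)) /=.
    rewrite (bigD1 p0 Qp0 (F := fun p => if p == p0 then Bq p0 else f p)) /= !eqxx.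
    set r1 := \sum_(i | _) _; set r2 := \sum_(i | _) _.
    have -> : r1 = r2 by apply: eq_bigr => p /andP [_ /negbTE ->].
    by move/addIr.
  have := congr1 (fun x => w x p0.1) eAB; rewrite /= wA wB eqxx.
  have -> : (p0.2 == p0.1) = false.
    by apply/negbTE; rewrite -val_eqE /= gtn_eqF.
  move=> /eqP; rewrite subr0 sub0r -subr_eq0 opprK -mulr2n pnatr_eq0 //.
have gv : gpt Qn Aq Bq a = v.
  apply: (ha _).1; split; first exact: gpt_in.
  by move=> y Py; exact: gpt_max.
have hneW : forall q, Qn q -> w a q.1 != w a q.2.
  by move=> q Qq; rewrite -subr_eq0 -wAB subr_eq0; exact: hneA.
have wv : forall k, w v k = \sum_y Num.sg (w a k - w a y).
  by move=> k; rewrite -gv w_gpt.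
have mono : forall i j, w a j < w a i -> w v j < w v i.
  by move=> i j hij; rewrite -gv; apply: w_mono => // k; rewrite gv.
have hbest : forall p, Qn p -> best Aq Bq v p = best Aq Bq a p /\
    dotv v (Aq p) != dotv v (Bq p).
  move=> p Qp; have eA := wAB a p; have eV := wAB v p; rewrite /best.
  have := hneW p Qp; rewrite neq_lt => /orP [h|h].
    have h' := mono _ _ h.
    have c1 : dotv a (Aq p) < dotv a (Bq p).
      by rewrite -subr_lt0 eA subr_lt0.
    have c2 : dotv v (Aq p) < dotv v (Bq p).
      by rewrite -subr_lt0 eV subr_lt0.
    have n1 : (dotv a (Bq p) < dotv a (Aq p)) = false by rewrite ltNge (ltW c1).
    have n2 : (dotv v (Bq p) < dotv v (Aq p)) = false by rewrite ltNge (ltW c2).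
    by rewrite n1 n2 neq_lt c2.
  have h' := mono _ _ h.
  have c1 : dotv a (Bq p) < dotv a (Aq p).
    by rewrite -subr_gt0 eA subr_gt0.
  have c2 : dotv v (Bq p) < dotv v (Aq p).
    by rewrite -subr_gt0 eV subr_gt0.
  by rewrite c1 c2 neq_lt c2 orbT.
have gvv : gpt Qn Aq Bq v = v.
  by rewrite -{2}gv; apply: eq_bigr => p Qp; have [-> _] := hbest p Qp.
have hneV : forall p, Qn p -> dotv v (Aq p) != dotv v (Bq p).
  by move=> p Qp; have [_ ->] := hbest p Qp.
have Pv : PS Qn Aq Bq v by have [] := hv.
move=> x; split.
  move=> [Px hx]; rewrite -gvv; apply: (gpt_uniq hneV Px).
  by rewrite gvv; exact: hx.
move=> ->; split => // y Py.
by have := @gpt_max _ _ _ Qn Aq Bq v y Py; rewrite gvv.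
Qed.

End Spec.

Theorem mainTheorem5 (R : realType) (n : nat) (hn : (1 <= n)%N)
    (v : 'rV[R]_(n + n)) :
  is_vertex (@NewtU R n) v ->
  normal_cone (@NewtU R n) (fun x => x = v) v.
Proof.
move=> [a ha]; rewrite /normal_cone NewtU_PS; rewrite NewtU_PS in ha.
exact: main_aux ha.
Qed.
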